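(* Let $N\ge1$ be an integer, $d>0$, $T>0$, and $0\le s_1\le\dots\le s_N$. Let $x^*$ be the optimal solution of the (assumed feasible) problem $$\min_{x\in\mathbb{R}^{N+1}}\ \sum_{i=1}^{N+1}x_i^2$$ subject to - $\sum_{i=1}^k x_i\ge s_k+kd$ for $1\le k\le N$, - $x_i\ge 2d$ for $2\le i\le N$, - $x_{N+1}\ge d$, - $\sum_{i=1}^{N+1}x_i=T+Nd$. Then $x_N^*\ge x_{N+1}^*$. Moreover, $x_N^*>x_{N+1}^*$ only if at least one of the following holds: (1) $\sum_{i=1}^N x_i^*=s_N+Nd$, or (2) $x_N^*=2d$.
   Context: The problem arises from age-of-information minimization for a single energy harvesting transmitter with energy arrival times $s_k$, fixed service time $d$, and session length $T$. Its objective is strictly convex, so the optimal solution is unique. *)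

(* Defs.v *)
(* concrete reals R. Vectors in R^{N+1} are functions nat -> R,
   only indices 1..N+1 are used. *)
From Stdlib Require Import Reals Lra Lia.
Open Scope R_scope.

Fixpoint psum (f : nat -> R) (k : nat) : R :=
  match k with
  | O => 0
  | S k' => psum f k' + f k
  end.

Definition feasible (N : nat) (d T : R) (s : nat -> R) (x : nat -> R) : Prop :=
  (forall k : nat, (1 <= k <= N)%nat -> psum x k >= s k + INR k * d) /\
  (forall i : nat, (2 <= i <= N)%nat -> x i >= 2 * d) /\
  x (N + 1)%nat >= d /\
  psum x (N + 1) = T + INR N * d.

Definition objective (N : nat) (x : nat -> R) : R :=
  psum (fun i => x i ^ 2) (N + 1).

Definition optimal (N : nat) (d T : R) (s : nat -> R) (x : nat -> R) : Prop :=
  feasible N d T s x /\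
  forall y : nat -> R, feasible N d T s y -> objective N x <= objective N y.

(* Main.v *)
Require Import Defs.
From Stdlib Require Import Reals Lra Lia.
Open Scope R_scope.

Lemma psum_ext (f g : nat -> R) (k : nat) :
  (forall i, (1 <= i <= k)%nat -> f i = g i) -> psum f k = psum g k.
Proof.
  induction k as [|k IH]; intros H; simpl; [reflexivity|].
  rewrite IH by (intros; apply H; lia). rewrite (H (S k)) by lia. reflexivity.
Qed.

Definition pert (x : nat -> R) (M : nat) (e : R) (i : nat) : R :=
  if Nat.eqb i (S M) then x i + e else if Nat.eqb i (S (S M)) then x i - e else x i.

Lemma pert_low x M e i : (i <= M)%nat -> pert x M e i = x i.
Proof.
  intros H; unfold pert.
  destruct (Nat.eqb_spec i (S M)); [lia|].
  destruct (Nat.eqb_spec i (S (S M))); [lia|]. reflexivity.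
Qed.

Lemma pert_N x M e : pert x M e (S M) = x (S M) + e.
Proof. unfold pert. rewrite Nat.eqb_refl. reflexivity. Qed.

Lemma pert_N1 x M e : pert x M e (S M + 1) = x (S M + 1)%nat - e.
Proof.
  unfold pert. replace (S M + 1)%nat with (S (S M)) by lia.
  destruct (Nat.eqb_spec (S (S M)) (S M)); [lia|]. rewrite Nat.eqb_refl. reflexivity.
Qed.

Lemma psum_pert_low x M e k : (k <= M)%nat -> psum (pert x M e) k = psum x k.
Proof. intros; apply psum_ext; intros; apply pert_low; lia. Qed.

Lemma psum_pert_N x M e : psum (pert x M e) (S M) = psum x (S M) + e.
Proof.
  simpl. rewrite psum_pert_low by lia. rewrite pert_N. ring.
Qed.

Lemma psum_pert_N1 x M e : psum (pert x M e) (S M + 1) = psum x (S M + 1).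
Proof.
  replace (S M + 1)%nat with (S (S M)) by lia.
  change (psum (pert x M e) (S M) + pert x M e (S (S M)) = psum x (S M) + x (S (S M))).
  rewrite psum_pert_N. replace (S (S M)) with (S M + 1)%nat by lia.
  rewrite pert_N1. ring.
Qed.

Lemma obj_pert x M e : objective (S M) (pert x M e) =
  objective (S M) x + ((x (S M) + e)^2 - x (S M)^2)
   + ((x (S M + 1)%nat - e)^2 - x (S M + 1)%nat ^2).
Proof.
  unfold objective. replace (S M + 1)%nat with (S (S M)) by lia. cbn [psum].
  rewrite (psum_ext (fun i => pert x M e i ^ 2) (fun i => x i ^ 2) M)
    by (intros; rewrite pert_low by lia; reflexivity).
  rewrite pert_N. replace (S (S M)) with (S M + 1)%nat by lia.
  rewrite pert_N1. ring.
Qed.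

Lemma pert_feas N d T s x M e :
  N = S M -> feasible N d T s x ->
  psum x N + e >= s N + INR N * d ->
  ((2 <= N)%nat -> x N + e >= 2 * d) ->
  x (N+1)%nat - e >= d ->
  feasible N d T s (pert x M e).
Proof.
  intros -> [H1 [H2 [H3 H4]]] A B C.
  split; [|split; [|split]].
  - intros k Hk. destruct (Nat.eq_dec k (S M)) as [->|].
    + rewrite psum_pert_N. exact A.
    + rewrite psum_pert_low by lia. apply H1; lia.
  - intros i Hi. destruct (Nat.eq_dec i (S M)) as [->|].
    + rewrite pert_N. apply B; lia.
    + rewrite pert_low by lia. apply H2; lia.
  - rewrite pert_N1. exact C.
  - rewrite psum_pert_N1. exact H4.
Qed.

Theorem lemma3 (N : nat) (d T : R) (s : nat -> R) (x : nat -> R) :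
  (1 <= N)%nat -> 0 < d -> 0 < T ->
  0 <= s 1%nat ->
  (forall k : nat, (1 <= k)%nat -> (k < N)%nat -> s k <= s (S k)) ->
  (exists y : nat -> R, feasible N d T s y) ->
  optimal N d T s x ->
  x N >= x (N + 1)%nat /\
  (x N > x (N + 1)%nat ->
     psum x N = s N + INR N * d \/ x N = 2 * d).
Proof.
  intros HN Hd HT Hs1 Hmono _ [Hf Hopt].
  destruct N as [|M]; [lia|].
  pose proof Hf as [H1 [H2 [H3 H4]]].
  assert (HxN : x (S M) >= d).
  { destruct M as [|M'].
    - specialize (H1 1%nat ltac:(lia)). simpl in H1. simpl. lra.
    - specialize (H2 (S (S M')) ltac:(lia)). lra. }
  split.
  - destruct (Rge_or_gt (x (S M)) (x (S M + 1)%nat)) as [h|h]; [exact h|].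
    exfalso.
    set (a := x (S M)) in *. set (b := x (S M + 1)%nat) in *.
    set (e := (b - a) / 2).
    assert (F : feasible (S M) d T s (pert x M e)).
    { apply pert_feas; auto; unfold e; fold a; fold b.
      - specialize (H1 (S M) ltac:(lia)). lra.
      - intros. specialize (H2 (S M) ltac:(lia)). fold a in H2. lra.
      - lra. }
    specialize (Hopt _ F). rewrite obj_pert in Hopt. fold a b in Hopt.
    unfold e in Hopt. nra.
  - intros h.
    destruct (Req_dec (psum x (S M)) (s (S M) + INR (S M) * d)) as [E|E]; [left; exact E|].
    destruct (Req_dec (x (S M)) (2 * d)) as [E2|E2]; [right; exact E2|].
    exfalso.
    set (a := x (S M)) in *. set (b := x (S M + 1)%nat) in *.
    assert (S1 : psum x (S M) > s (S M) + INR (S M) * d).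
    { specialize (H1 (S M) ltac:(lia)). lra. }
    set (sl := psum x (S M) - (s (S M) + INR (S M) * d)).
    set (sl2 := if Nat.leb 2 (S M) then a - 2 * d else a - b).
    assert (P2 : sl2 > 0).
    { unfold sl2. destruct (Nat.leb_spec 2 (S M)).
      - specialize (H2 (S M) ltac:(lia)). fold a in H2. lra.
      - lra. }
    set (e := Rmin ((a - b) / 2) (Rmin sl sl2)).
    assert (Ep : e > 0).
    { unfold e. apply Rmin_glb_lt; [lra|]. apply Rmin_glb_lt; unfold sl in *; lra. }
    assert (E1 : e <= (a - b) / 2) by apply Rmin_l.
    assert (E3 : e <= sl) by (eapply Rle_trans; [apply Rmin_r|apply Rmin_l]).
    assert (E4 : e <= sl2) by (eapply Rle_trans; [apply Rmin_r|apply Rmin_r]).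
    assert (F : feasible (S M) d T s (pert x M (- e))).
    { apply pert_feas; auto; fold a; fold b.
      - unfold sl in E3. lra.
      - intros Hle. unfold sl2 in E4.
        destruct (Nat.leb_spec 2 (S M)); [lra|lia].
      - lra. }
    specialize (Hopt _ F). rewrite obj_pert in Hopt. fold a b in Hopt.
    nra.
Qed.
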